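(* Let $G=\operatorname{SL}(V)$ with $n=\dim V$ even. A unipotent element $u\in G$ acts on $(V\otimes V^*,b_V)$ as a distinguished unipotent element if and only if $n=2$ and $V\cong V_2$ as $K[u]$-modules.
   Context: $K$ is algebraically closed of characteristic 2; $V_d$ is the $d$-dimensional indecomposable $K[u]$-module, $X=u-1$. $b_V$ on $V\otimes V^*$ is $b_V(v\otimes f,v'\otimes f')=f(v')f'(v)+f(v)f'(v')$ (non-degenerate alternating when $n$ is even). For a non-degenerate alternating $u$-invariant form $c$ on $W$, let $\varepsilon_{W,c}(d)=0$ if $c(X^{d-1}w,w)=0$ for all $w$ with $X^dw=0$, and $1$ otherwise. We say $u$ acts on $(W,c)$ as a distinguished unipotent element if every Jordan block size $d$ of $u$ on $W$ is even, has multiplicity at most two, and satisfies $\varepsilon_{W,c}(d)=1$; equivalently, the image of $u$ in $\operatorname{Sp}(W,c)$ has centralizer containing no non-trivial torus. *)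

(* Defs.v *)
From HB Require Import structures.
From mathcomp Require Import all_boot all_order all_algebra.
Set Implicit Arguments. Unset Strict Implicit. Unset Printing Implicit Defensive.
Import Order.TTheory GRing.Theory Num.Theory.
Local Open Scope ring_scope.

Section Defs.
Variable K : fieldType.

Definition mxpow (m : nat) (A : 'M[K]_m) (k : nat) : 'M[K]_m :=
  iter k (mulmx A) 1%:M.

Definition unipotent (m : nat) (u : 'M[K]_m) : Prop :=
  exists k, mxpow (u - 1%:M) k = 0.

(* Number of Jordan blocks of size d (d >= 1) of the nilpotent part
   N = T - 1 of an endomorphism of W = 'rV_m (acting by w |-> w *m T):
   rk N^(d-1) - 2 rk N^d + rk N^(d+1). *)
Definition jordan_mult (m : nat) (T : 'M[K]_m) (d : nat) : int :=
  let N := T - 1%:M in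
  (\rank (mxpow N d.-1))%:Z - 2%:Z * (\rank (mxpow N d))%:Z
    + (\rank (mxpow N d.+1))%:Z.

Definition eps_one (m : nat) (T : 'M[K]_m) (c : 'rV[K]_m -> 'rV[K]_m -> K)
    (d : nat) : Prop :=
  let N := T - 1%:M in
  exists w : 'rV[K]_m, w *m mxpow N d = 0 /\ c (w *m mxpow N d.-1) w != 0.

Definition distinguished (m : nat) (T : 'M[K]_m)
    (c : 'rV[K]_m -> 'rV[K]_m -> K) : Prop :=
  forall d : nat, (0 < d)%N -> 0 < jordan_mult T d ->
    [/\ ~~ odd d, jordan_mult T d <= 2 & eps_one T c d].

(* V = 'cV_n (u acts by v |-> u v); V (x) V^* is identified with 'M_n via
   v (x) f |-> v *m f (f a row vector, f(v) = f *m v), so u acts on it by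
   A |-> u A u^-1.  Elements of V (x) V^* are encoded as 'rV_(n*n) via mxvec. *)
Definition tensor_action (n : nat) (u : 'M[K]_n) : 'M[K]_(n * n) :=
  lin_mx (fun A : 'M[K]_n => u *m A *m invmx u).

(* b_V(v (x) f, v' (x) f') = f(v') f'(v) + f(v) f'(v'), extended bilinearly:
   b_V(A, B) = tr(A B) + tr(A) tr(B). *)
Definition bV (n : nat) (x y : 'rV[K]_(n * n)) : K :=
  \tr (vec_mx x *m vec_mx y) + \tr (vec_mx x) * \tr (vec_mx y).

Definition jordan_unip (n : nat) : 'M[K]_n :=
  \matrix_(i < n, j < n) ((i == j) || (j == i.+1 :> nat))%:R.

Definition iso_Vn (n : nat) (u : 'M[K]_n) : Prop :=
  exists P : 'M[K]_n, P \in unitmx /\ u *m P = P *m jordan_unip n.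

End Defs.

(* Main.v *)
Require Import Defs.
From HB Require Import structures.
From mathcomp Require Import all_boot all_order all_algebra.
From mathcomp Require Import zify.
Set Implicit Arguments. Unset Strict Implicit. Unset Printing Implicit Defensive.
Import Order.TTheory GRing.Theory Num.Theory.
Local Open Scope ring_scope.



Lemma addxx2 (K : fieldType) (h2 : (2%:R : K) = 0) (V : lmodType K) (x : V) : x + x = 0.
Proof. by rewrite -mulr2n -scaler_nat h2 scale0r. Qed.

Lemma oppx2 (K : fieldType) (h2 : (2%:R : K) = 0) (V : lmodType K) (x : V) : - x = x.
Proof. by apply/eqP; rewrite eq_sym -subr_eq0 opprK addxx2. Qed.

Definition Fm (K : fieldType) (n : nat) (u : 'M[K]_n) (A : 'M[K]_n) := u *m A *m invmx u - A.
Definition adP (K : fieldType) (n : nat) (P : 'M[K]_n) (A : 'M[K]_n) := P *m A + A *m P.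

Lemma mxpow_key (K : fieldType) (n : nat) (u : 'M[K]_n) j (w : 'rV[K]_(n * n)) :
  w *m mxpow (tensor_action u - 1%:M) j = mxvec (iter j (Fm u) (vec_mx w)).
Proof.
elim: j w => [|j IH] w; first by rewrite /= mulmx1 vec_mxK.
rewrite [mxpow _ _]/= mulmxA IH iterSr; congr (mxvec (iter j _ _)).
rewrite mulmxBr mulmx1 /tensor_action.
have -> : (fun A : 'M[K]_n => u *m A *m invmx u) = (mulmxr (invmx u) \o mulmx u) by [].
by rewrite mul_rV_lin linearB /= !mxvecK /Fm.
Qed.

Lemma functional_row (K : fieldType) (n : nat) (phi : 'rV[K]_n) (psi : 'cV[K]_n) (w : 'rV[K]_(n * n)) :
  w *m lin1_mx (mulmxr psi \o mulmx phi \o vec_mx) = phi *m vec_mx w *m psi.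
Proof. by rewrite mul_rV_lin1. Qed.

Lemma rank_trig (K : fieldType) (m r : nat) (Mx : 'M[K]_m) (w : 'I_r -> 'rV[K]_m)
  (g : 'I_r -> 'cV[K]_m) :
  (forall i, w i *m Mx *m g i = 1%:M) ->
  (forall i j : 'I_r, (j < i)%N -> w i *m Mx *m g j = 0) -> (r <= \rank Mx)%N.
Proof.
move=> hd hl.
pose W : 'M_(r, m) := \matrix_(i < r) w i.
pose G : 'M_(m, r) := \matrix_(k < m, j < r) g j k 0.
have HT : forall i j, (W *m Mx *m G) i j = (w i *m Mx *m g j) 0 0.
  move=> i j.
  rewrite !mxE. apply: eq_bigr => k _. rewrite !mxE. congr (_ * _).
  apply: eq_bigr => l _; rewrite !mxE //.
have Htr : is_trig_mx (W *m Mx *m G)^T.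
  apply/is_trig_mxP => i j lij; rewrite mxE HT hl //.
  by rewrite mxE.
have Hdet : \det (W *m Mx *m G) = 1.
  rewrite -det_tr det_trig //; apply: big1 => i _.
  by rewrite mxE HT hd mxE.
have Hu : (W *m Mx *m G) \in unitmx by rewrite unitmxE Hdet unitr1.
have := mxrank_unit Hu => Hr.
rewrite -Hr; apply: leq_trans (mxrankM_maxl _ _) _.
exact: mxrankM_maxr.
Qed.



Lemma mxpowS (K : fieldType) n (A : 'M[K]_n) k : mxpow A k.+1 = A *m mxpow A k.
Proof. by []. Qed.

Lemma mxpow_comm (K : fieldType) n (A B : 'M[K]_n) k :
  A *m B = B *m A -> mxpow A k *m B = B *m mxpow A k.
Proof.
move=> hAB; elim: k => [|k IH]; first by rewrite /= mul1mx mulmx1.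
by rewrite mxpowS -mulmxA IH !mulmxA hAB.
Qed.

Lemma mxpowSr (K : fieldType) n (A : 'M[K]_n) k : mxpow A k.+1 = mxpow A k *m A.
Proof. by rewrite mxpowS -(mxpow_comm k (erefl (A *m A))). Qed.

Lemma mxpowD (K : fieldType) n (A : 'M[K]_n) a b : mxpow A (a + b) = mxpow A a *m mxpow A b.
Proof. by elim: a => [|a IH]; rewrite ?mul1mx // addSn mxpowS IH mulmxA. Qed.

Lemma mxpow0 (K : fieldType) n (A : 'M[K]_n) : mxpow A 0 = 1%:M.
Proof. by []. Qed.

Lemma mxpow1 (K : fieldType) n (A : 'M[K]_n) : mxpow A 1 = A.
Proof. by rewrite mxpowS mxpow0 mulmx1. Qed.

Lemma mxpow_zero (K : fieldType) n (A : 'M[K]_n) a b : mxpow A a = 0 -> (a <= b)%N -> mxpow A b = 0.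
Proof. by move=> ha /subnKC <-; rewrite mxpowD ha mul0mx. Qed.

Lemma F_ad (K : fieldType) (h2 : (2%:R : K) = 0) n (u A : 'M[K]_n) : u \in unitmx ->
  Fm u A = adP (u - 1%:M) A *m invmx u.
Proof.
move=> hu; rewrite /Fm /adP.
have -> : (u - 1%:M) *m A + A *m (u - 1%:M) = u *m A - A *m u.
  rewrite -[A *m (u - 1%:M)](oppx2 h2) mulmxBl mulmxBr mul1mx mulmx1.
  by rewrite opprB addrA addrNK.
by rewrite mulmxBl -(mulmxA A) mulmxV // mulmx1.
Qed.

Lemma iterF (K : fieldType) (h2 : (2%:R : K) = 0) n (u A : 'M[K]_n) j : u \in unitmx ->
  iter j (Fm u) A = iter j (adP (u - 1%:M)) A *m mxpow (invmx u) j.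
Proof.
move=> hu; elim: j => [|j IH]; first by rewrite /= mulmx1.
have hc : invmx u *m (u - 1%:M) = (u - 1%:M) *m invmx u.
  by rewrite mulmxBr mulmxBl mulVmx // mulmxV // mul1mx mulmx1.
rewrite !iterS IH F_ad // /adP mulmxA mxpowSr !mulmxA; congr (_ *m _); rewrite mulmxDl.
congr (_ + _); rewrite -!mulmxA; congr (_ *m _).
by rewrite (mxpow_comm j hc).
Qed.

Lemma ad2 (K : fieldType) (h2 : (2%:R : K) = 0) n (P A : 'M[K]_n) :
  adP P (adP P A) = adP (P *m P) A.
Proof.
rewrite /adP mulmxDr mulmxDl !mulmxA.
rewrite addrA -(addrA (P *m P *m A)).
by rewrite (addxx2 h2 (P *m A *m P)) addr0 -mulmxA.
Qed.

Lemma ad_pow2 (K : fieldType) (h2 : (2%:R : K) = 0) n (N A : 'M[K]_n) k :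
  iter (2 ^ k) (adP N) A = adP (mxpow N (2 ^ k)) A.
Proof.
elim: k A => [|k IH] A; first by rewrite expn0 mxpow1.
rewrite expnS mul2n -addnn iterD IH IH ad2 // -mxpowD //.
Qed.

Lemma ad0 (K : fieldType) n (P : 'M[K]_n) : adP P 0 = 0.
Proof. by rewrite /adP mulmx0 mul0mx addr0. Qed.

Lemma ad_S (K : fieldType) (h2 : (2%:R : K) = 0) n (N A : 'M[K]_n) k :
  iter (2 ^ k).-1 (adP N) A =
  \sum_(i < 2 ^ k) mxpow N i *m A *m mxpow N ((2 ^ k).-1 - i).
Proof.
elim: k => [|k IH]; first by rewrite expn0 big_ord1 /= mul1mx mulmx1.
have hp : (0 < 2 ^ k)%N by rewrite expn_gt0.
have -> : (2 ^ k.+1).-1 = (2 ^ k + (2 ^ k).-1)%N by rewrite expnS mul2n -addnn; lia.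
rewrite iterD ad_pow2 // IH /adP mulmx_sumr mulmx_suml.
rewrite expnS mul2n -addnn big_split_ord /= addrC; congr (_ + _).
  apply: eq_bigr => i _ /=.
  have -> : (2 ^ k + (2 ^ k).-1 - (2 ^ k + i) = (2 ^ k).-1 - i)%N by lia.
  by rewrite mxpowD !mulmxA.
apply: eq_bigr => i _ /=.
have -> : (2 ^ k + (2 ^ k).-1 - i = ((2 ^ k).-1 - i) + 2 ^ k)%N.
  have := ltn_ord i; lia.
by rewrite mxpowD !mulmxA.
Qed.



Lemma mxpow_inv (K : fieldType) n (a b : 'M[K]_n) j : a *m b = 1%:M ->
  mxpow a j *m mxpow b j = 1%:M.
Proof.
move=> hab; elim: j => [|j IH]; first by rewrite mul1mx.
by rewrite mxpowSr mxpowS -mulmxA (mulmxA a) hab mul1mx.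
Qed.

Lemma iterXu (K : fieldType) (h2 : (2%:R : K) = 0) n (u : 'M[K]_n) (hu : u \in unitmx) j w :
  w *m mxpow (tensor_action u - 1%:M) j =
  mxvec (iter j (adP (u - 1%:M)) (vec_mx w) *m mxpow (invmx u) j).
Proof. by rewrite mxpow_key iterF. Qed.

Lemma mxpowX0 (K : fieldType) (h2 : (2%:R : K) = 0) n (u : 'M[K]_n) (hu : u \in unitmx) j :
  (forall A, iter j (adP (u - 1%:M)) A = 0) -> mxpow (tensor_action u - 1%:M) j = 0.
Proof.
move=> h; apply/row_matrixP => i; rewrite row0 rowE iterXu // h mul0mx.
exact: linear0.
Qed.

Lemma rank_lowerX (K : fieldType) (h2 : (2%:R : K) = 0) n (u : 'M[K]_n) (hu : u \in unitmx)
  r j (A : 'I_r -> 'M[K]_n) (phi : 'I_r -> 'rV[K]_n) (psi : 'I_r -> 'cV[K]_n) :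
  (forall i, phi i *m iter j (adP (u - 1%:M)) (A i) *m psi i = 1%:M) ->
  (forall i k : 'I_r, (k < i)%N -> phi k *m iter j (adP (u - 1%:M)) (A i) *m psi k = 0) ->
  (r <= \rank (mxpow (tensor_action u - 1%:M) j))%N.
Proof.
move=> hd hl.
have key : forall i k, mxvec (A i) *m mxpow (tensor_action u - 1%:M) j
   *m lin1_mx (mulmxr (mxpow u j *m psi k) \o mulmx (phi k) \o vec_mx)
   = phi k *m iter j (adP (u - 1%:M)) (A i) *m psi k.
  move=> i k; rewrite functional_row iterXu // mxvecK !mxvecK.
  rewrite -!mulmxA; congr (_ *m (_ *m _)).
  by rewrite !mulmxA mxpow_inv ?mul1mx // mulVmx.
apply: (rank_trig (w := fun i => mxvec (A i))
   (g := fun k => lin1_mx (mulmxr (mxpow u j *m psi k) \o mulmx (phi k) \o vec_mx))).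
  by move=> i; rewrite key.
by move=> i k hki; rewrite key hl.
Qed.

Lemma exists_vf (K : fieldType) m (B : 'M[K]_m) : B != 0 ->
  exists v : 'cV[K]_m, exists f : 'rV[K]_m, f *m B *m v = 1%:M.
Proof.
move=> hB.
case: (pickP (fun ij : 'I_m * 'I_m => B ij.1 ij.2 != 0)) => [[i j] /= hij | h0]; last first.
  case/negP: hB; apply/eqP/matrixP => i j; move: (h0 (i, j)) => /= /negbFE/eqP ->.
  by rewrite mxE.
exists (delta_mx j 0), ((B i j)^-1 *: delta_mx 0 i).
rewrite -scalemxAl -scalemxAl -rowE -colE.
have -> : col j (row i B) = (B i j)%:M.
  by apply/matrixP => x y; rewrite !ord1 !mxE eqxx mulr1n.
by rewrite scale_scalar_mx mulVf.
Qed.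



Lemma jm1_pos (K : fieldType) p (T : 'M[K]_p) (z : 'rV[K]_p) :
  z *m (T - 1%:M) = 0 -> ~~ (z <= T - 1%:M)%MS -> 0 < jordan_mult T 1.
Proof.
move=> hz hnz; rewrite /jordan_mult /=.
set X := T - 1%:M.
rewrite !mulmx1 mxrank1.
have hmk := mxrank_mul_ker X X.
have hcap : (X :&: kermx X <= kermx X)%MS := capmxSr _ _.
have hlt : (\rank (X :&: kermx X) < \rank (kermx X))%N.
  rewrite ltn_neqAle (mxrank_leqif_sup hcap).2 (mxrank_leqif_sup hcap).1 andbT.
  apply/negP => hk; case/negP: hnz.
  apply: submx_trans (capmxSl X (kermx X)).
  apply: submx_trans hk; exact/sub_kermxP.
rewrite mxrank_ker in hlt.
have hr := rank_leq_row X.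
lia.
Qed.

Lemma trace_Fm (K : fieldType) n (u B : 'M[K]_n) : u \in unitmx -> \tr (Fm u B) = 0.
Proof.
move=> hu; rewrite /Fm linearB /= mxtrace_mulC mulmxA mulVmx // mul1mx.
by rewrite subrr.
Qed.

Lemma oddZ (K : fieldType) (h2 : (2%:R : K) = 0) n (N : 'M[K]_n) (v : 'cV[K]_n) (f : 'rV[K]_n) t :
  mxpow N t = 0 -> (0 < t)%N ->
  let Z := \sum_(i < t) mxpow N i *m (v *m f) *m mxpow N (t.-1 - i) in
  adP N Z = 0 /\ \tr Z = t%:R * (f *m mxpow N t.-1 *m v) 0 0.
Proof.
move=> hN ht Z; split.
  pose a i := mxpow N i *m (v *m f) *m mxpow N (t - i).
  have e1 : N *m Z = \sum_(i < t) a i.+1.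
    rewrite /Z mulmx_sumr; apply: eq_bigr => i _.
    rewrite /a !mulmxA -mxpowS; congr (_ *m _); congr (mxpow N _); lia.
  have e2 : Z *m N = \sum_(i < t) a i.
    rewrite /Z mulmx_suml; apply: eq_bigr => i _.
    rewrite /a -mulmxA -mxpowSr; congr (_ *m mxpow N _).
    have := ltn_ord i; lia.
  have a0 : a 0%N = 0 by rewrite /a subn0 hN mulmx0.
  have at0 : a t = 0 by rewrite /a hN !mul0mx.
  have s1 : \sum_(i < t.+1) a i = a 0%N + \sum_(i < t) a i.+1 by rewrite big_ord_recl.
  have s2 : \sum_(i < t.+1) a i = \sum_(i < t) a i + a t by rewrite big_ord_recr.
  rewrite a0 add0r in s1; rewrite at0 addr0 in s2.
  by rewrite /adP e1 e2 -s1 /= s2 addxx2.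
rewrite /Z (linear_sum (@mxtrace K n)) /=.
have -> : \sum_(i < t) \tr (mxpow N i *m (v *m f) *m mxpow N (t.-1 - i))
   = \sum_(i < t) (f *m mxpow N t.-1 *m v) 0 0.
  apply: eq_bigr => i _.
  rewrite mulmxA -(mulmxA _ f) mxtrace_mulC.
  rewrite mulmxA.
  rewrite -[f *m _ *m mxpow N i]mulmxA -mxpowD.
  have -> : (t.-1 - i + i = t.-1)%N by have := ltn_ord i; lia.
  by rewrite /mxtrace big_ord1.
by rewrite sumr_const card_ord mulr_natl.
Qed.



Lemma natr_odd (K : fieldType) (h2 : (2%:R : K) = 0) t : (t%:R : K) = (odd t)%:R.
Proof. by rewrite {1}(divn_eq t 2) modn2 natrD natrM h2 mulr0 add0r. Qed.

Lemma case_odd (K : fieldType) (h2 : (2%:R : K) = 0) n (u : 'M[K]_n) (hu : u \in unitmx)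
  t (v : 'cV[K]_n) (f : 'rV[K]_n) :
  odd t -> mxpow (u - 1%:M) t = 0 -> f *m mxpow (u - 1%:M) t.-1 *m v = 1%:M ->
  0 < jordan_mult (tensor_action u) 1.
Proof.
move=> ht hN hf.
have t0 : (0 < t)%N by case: t ht {hN hf}.
have [hZ trZ] := oddZ h2 v f hN t0.
set Z := \sum_(i < t) _ in hZ trZ.
apply: (@jm1_pos _ _ _ (mxvec Z)).
  by rewrite -[tensor_action u - 1%:M]mxpow1 iterXu //= mxvecK hZ mul0mx linear0.
apply/negP => /submxP [D hD].
have : \tr Z = 0.
  rewrite -[Z]mxvecK hD -[tensor_action u - 1%:M]mxpow1 mxpow_key /= mxvecK.
  exact: trace_Fm.
rewrite trZ hf mxE eqxx mulr1n mulr1 natr_odd // ht => /eqP.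
by rewrite oner_eq0.
Qed.

Lemma eval_sum (K : fieldType) n (N : 'M[K]_n) (v : 'cV[K]_n) (f : 'rV[K]_n) M c b :
  f *m (\sum_(i < M) mxpow N i *m (mxpow N c *m (v *m f)) *m mxpow N (M.-1 - i))
    *m (mxpow N b *m v)
  = \sum_(i < M) (f *m mxpow N (i + c) *m v) *m (f *m mxpow N (M.-1 - i + b) *m v).
Proof.
rewrite mulmx_sumr mulmx_suml; apply: eq_bigr => i _.
by rewrite !mxpowD !mulmxA.
Qed.

Lemma sum_one (K : fieldType) M (F : 'I_M -> 'M[K]_1) (i0 : 'I_M) :
  (forall i, i != i0 -> F i = 0) -> F i0 = 1%:M -> \sum_(i < M) F i = 1%:M.
Proof.
move=> h0 h1; rewrite (bigD1 i0) //= h1 big1 ?addr0 // => i /h0 //.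
Qed.

Lemma jm_top (K : fieldType) (h2 : (2%:R : K) = 0) n (u : 'M[K]_n) (hu : u \in unitmx) M :
  mxpow (tensor_action u - 1%:M) M = 0 -> (0 < M)%N ->
  jordan_mult (tensor_action u) M = (\rank (mxpow (tensor_action u - 1%:M) M.-1))%:Z.
Proof.
move=> h0 hM; rewrite /jordan_mult; cbv zeta beta; rewrite h0 (mxpow_zero h0 (leqnSn M)) mxrank0.
by rewrite mulr0 subr0 addr0.
Qed.

Lemma case_even4 (K : fieldType) (h2 : (2%:R : K) = 0) n (u : 'M[K]_n) (hu : u \in unitmx)
  t (v : 'cV[K]_n) (f : 'rV[K]_n) :
  ~~ odd t -> (4 <= t)%N -> mxpow (u - 1%:M) t = 0 ->
  f *m mxpow (u - 1%:M) t.-1 *m v = 1%:M ->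
  exists d, (0 < d)%N /\ 2 < jordan_mult (tensor_action u) d.
Proof.
move=> hev ht hN hf.
set N := u - 1%:M in hN hf.
set K0 := trunc_log 2 t.-1.
have /andP [hb1 hb2] : (2 ^ K0 <= t.-1 < 2 ^ K0.+1)%N.
  by apply: trunc_log_bounds => //; lia.
have hK0 : (1 <= K0)%N by apply: trunc_log_max => //; rewrite expn1; lia.
set M := (2 ^ K0.+1)%N.
have hP : (0 < 2 ^ K0)%N by rewrite expn_gt0.
have hM2 : M = (2 ^ K0 + 2 ^ K0)%N by rewrite /M expnS mul2n addnn.
have [Q hQ] : exists Q, (2 ^ K0 = 2 * Q)%N.
  by exists (2 ^ K0.-1)%N; rewrite -expnS prednK.
have [R hR] : exists R, (t = 2 * R)%N.
  by exists t./2; rewrite -[t in LHS]odd_double_half (negbTE hev) add0n -mul2n.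
set s := (2 * t - 1 - M)%N.
have hs : (3 <= s)%N by rewrite /s; lia.
have htM : (t <= M)%N by lia.
have hXM : mxpow (tensor_action u - 1%:M) M = 0.
  apply: mxpowX0 => // A; rewrite ad_pow2 // (mxpow_zero hN htM) /adP mulmx0 mul0mx addr0.
  done.
have cm0 : forall m, (t <= m)%N -> f *m mxpow N m *m v = 0.
  by move=> m hm; rewrite (mxpow_zero hN hm) mulmx0 mul0mx.
exists M; split; first by rewrite expn_gt0.
rewrite jm_top //; last by rewrite expn_gt0.
have : (3 <= \rank (mxpow (tensor_action u - 1%:M) M.-1))%N; last first.
  by move=> h3; rewrite ltz_nat.
apply: (@rank_lowerX _ h2 _ u hu 3 M.-1 (fun c => mxpow N c *m (v *m f)) (fun _ => f)
   (fun c => mxpow N (s - c) *m v)).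
  move=> i; rewrite ad_S // eval_sum.
  have hi := ltn_ord i.
  have hi0 : (t.-1 - i < M)%N by lia.
  apply: (sum_one (i0 := Ordinal hi0)).
    move=> j hj.
    have hj' : (nat_of_ord j != t.-1 - i)%N by [].
    case: (leqP t (j + i)) => hji; first by rewrite cm0 // mul0mx.
    rewrite (cm0 (M.-1 - j + (s - i))%N) ?mulmx0 //.
    have := ltn_ord j; move: hj'; rewrite /s; lia.
  rewrite /=.
  have -> : (t.-1 - i + i = t.-1)%N by lia.
  have -> : (M.-1 - (t.-1 - i) + (s - i) = t.-1)%N by rewrite /s; lia.
  by rewrite hf mul1mx.
move=> i k hki; rewrite ad_S // eval_sum.
apply: big1 => j _.
case: (leqP t (j + i)) => hji; first by rewrite cm0 // mul0mx.
rewrite (cm0 (M.-1 - j + (s - k))%N) ?mulmx0 //.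
have := ltn_ord j; have := ltn_ord i; rewrite /s; lia.
Qed.



Lemma t2_f (K : fieldType) n (N : 'M[K]_n) (v : 'cV[K]_n) (f0 : 'rV[K]_n) :
  N *m N = 0 -> f0 *m N *m v = 1%:M ->
  let f := f0 - f0 *m v *m (f0 *m N) in f *m v = 0 /\ f *m N *m v = 1%:M.
Proof.
move=> hNN hf f; rewrite /f !mulmxBl; split.
  by rewrite -!mulmxA (mulmxA f0 N v) hf mulmx1 subrr.
by rewrite -!mulmxA (mulmxA N N) hNN mul0mx !mulmx0 subr0 mulmxA hf.
Qed.

Lemma X2_zero (K : fieldType) (h2 : (2%:R : K) = 0) n (u : 'M[K]_n) (hu : u \in unitmx) :
  (u - 1%:M) *m (u - 1%:M) = 0 -> mxpow (tensor_action u - 1%:M) 2 = 0.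
Proof.
move=> hNN; apply: mxpowX0 => // A /=.
by rewrite ad2 // hNN /adP mulmx0 mul0mx addr0.
Qed.

Lemma rank2_lower (K : fieldType) (h2 : (2%:R : K) = 0) n (u : 'M[K]_n) (hu : u \in unitmx)
  (v : 'cV[K]_n) (f : 'rV[K]_n) :
  (u - 1%:M) *m (u - 1%:M) = 0 -> f *m v = 0 -> f *m (u - 1%:M) *m v = 1%:M ->
  (2 <= \rank (mxpow (tensor_action u - 1%:M) 1))%N.
Proof.
move=> hNN hfv hfNv.
apply: (@rank_lowerX _ h2 _ u hu 2 1
   (fun c : 'I_2 => if nat_of_ord c == 0%N then v *m f *m (u - 1%:M) else v *m f)
   (fun _ => f) (fun c : 'I_2 => if nat_of_ord c == 0%N then v else (u - 1%:M) *m v)).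
all: move: hNN hfNv; generalize (u - 1%:M) => N hNN hfNv.
all: have hNN' : forall m (Y : 'M[K]_(m, n)), Y *m N *m N = 0 by
  move=> m Y; rewrite -mulmxA hNN mulmx0.
  case=> [[|[|m]] hi] //=; rewrite /adP !mulmxDr !mulmxDl !mulmxA;
  by rewrite ?hNN' ?hfNv ?hfv ?mul0mx ?mul1mx ?hfNv ?hfv ?mul0mx ?mul1mx ?addr0 ?add0r.
case=> [[|[|m]] hi] [[|[|m']] hk] //= _; rewrite /adP !mulmxDr !mulmxDl !mulmxA.
by rewrite ?hNN' ?hfNv ?hfv ?mul0mx ?mul1mx ?hfNv ?hfv ?mul0mx ?mul1mx ?addr0 ?add0r.
Qed.

Lemma rank3_lower (K : fieldType) (h2 : (2%:R : K) = 0) n (u : 'M[K]_n) (hu : u \in unitmx)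
  (v w : 'cV[K]_n) (f h : 'rV[K]_n) :
  (u - 1%:M) *m (u - 1%:M) = 0 -> f *m v = 0 -> f *m (u - 1%:M) *m v = 1%:M ->
  h *m v = 0 -> h *m (u - 1%:M) *m v = 0 -> h *m w = 1%:M ->
  (3 <= \rank (mxpow (tensor_action u - 1%:M) 1))%N.
Proof.
move=> hNN hfv hfNv hhv hhNv hhw.
apply: (@rank_lowerX _ h2 _ u hu 3 1
   (fun c : 'I_3 => match nat_of_ord c with 0 => v *m f *m (u - 1%:M) | 1 => v *m f | _ => v *m h end)
   (fun _ => f)
   (fun c : 'I_3 => match nat_of_ord c with 0 => v | 1 => (u - 1%:M) *m v | _ => w end)).
all: move: hNN hfNv hhNv; generalize (u - 1%:M) => N hNN hfNv hhNv.
all: have hNN' : forall m (Y : 'M[K]_(m, n)), Y *m N *m N = 0 by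
  move=> m Y; rewrite -mulmxA hNN mulmx0.
  case=> [[|[|[|m]]] hi] //=; rewrite /adP !mulmxDr !mulmxDl !mulmxA;
  by rewrite ?hNN' ?hfNv ?hfv ?hhv ?hhNv ?hhw ?mul0mx ?mul1mx ?hfNv ?hfv ?hhv ?hhNv ?hhw ?mul0mx ?mul1mx ?addr0 ?add0r.
case=> [[|[|[|m]]] hi] [[|[|[|m']]] hk] //= _; rewrite /adP !mulmxDr !mulmxDl !mulmxA.
all: by rewrite ?hNN' ?hfNv ?hfv ?hhv ?hhNv ?hhw ?mul0mx ?mul1mx ?hfNv ?hfv ?hhv ?hhNv ?hhw ?mul0mx ?mul1mx ?addr0 ?add0r.
Qed.

Lemma row_one (K : fieldType) n (h : 'rV[K]_n) : h != 0 -> exists w : 'cV[K]_n, h *m w = 1%:M.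
Proof.
move=> hh.
case: (pickP (fun j : 'I_n => h 0 j != 0)) => [j /= hj | h0]; last first.
  case/negP: hh; apply/eqP/matrixP => i j; move: (h0 j) => /= /negbFE/eqP.
  by rewrite !ord1 mxE.
exists ((h 0 j)^-1 *: delta_mx j 0).
rewrite -scalemxAr -colE.
have -> : col j h = (h 0 j)%:M.
  by apply/matrixP => x y; rewrite !ord1 !mxE eqxx mulr1n.
by rewrite scale_scalar_mx mulVf.
Qed.

Lemma exists_hw (K : fieldType) n (a b : 'cV[K]_n) : (3 <= n)%N ->
  exists h : 'rV[K]_n, exists w : 'cV[K]_n, [/\ h *m a = 0, h *m b = 0 & h *m w = 1%:M].
Proof.
move=> hn.
set C := row_mx a b.
have hr : (1 <= \rank (kermx C))%N.
  rewrite mxrank_ker; have := rank_leq_col C; lia.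
have : kermx C != 0 by rewrite -mxrank_eq0 -lt0n.
case: (pickP (fun i : 'I_n => row i (kermx C) != 0)) => [i /= hi | h0] hk; last first.
  case/negP: hk; apply/eqP/row_matrixP => i; move: (h0 i) => /= /negbFE/eqP ->.
  by rewrite row0.
have [w hw] := row_one hi.
exists (row i (kermx C)), w.
have : row i (kermx C) *m C = 0 by rewrite -row_mul mulmx_ker row0.
rewrite /C mul_mx_row => /eqP; rewrite row_mx_eq0 => /andP [/eqP ha /eqP hb].
by split.
Qed.



Lemma ord2_cases (i : 'I_(1 + 1)) : i = lshift 1 (0 : 'I_1) \/ i = rshift 1 (0 : 'I_1).
Proof.
case: i => [[|[|//]] hi]; [left | right]; exact: val_inj.
Qed.

Lemma J2_block (K : fieldType) :
  jordan_unip K 2 = block_mx (1%:M : 'M[K]_1) 1%:M 0 1%:M :> 'M_(1 + 1).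
Proof.
apply/matrixP => i j.
case: (ord2_cases i) => ->; case: (ord2_cases j) => ->;
  rewrite ?block_mxEul ?block_mxEur ?block_mxEdl ?block_mxEdr !mxE //=.
Qed.

Lemma iso_from (K : fieldType) (u : 'M[K]_2) (v : 'cV[K]_2) (f : 'rV[K]_2) :
  (u - 1%:M) *m (u - 1%:M) = 0 -> f *m v = 0 -> f *m (u - 1%:M) *m v = 1%:M ->
  iso_Vn u.
Proof.
move=> hNN hfv hfNv.
move: hNN hfNv; have hu : u = (u - 1%:M) + 1%:M by rewrite subrK.
move: hu; generalize (u - 1%:M) => N hu hNN hfNv.
exists (row_mx (N *m v) v : 'M_(2, 1 + 1)); split.
  have hL : col_mx f (f *m N) *m (row_mx (N *m v) v : 'M_(2, 1 + 1)) = 1%:M.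
    rewrite mul_col_row !mulmxA hfNv hfv -(mulmxA f N N) hNN mulmx0 mul0mx.
    by rewrite scalar_mx_block.
  by case: (mulmx1_unit hL).
change (@mulmx K 2 2 (1+1) u (row_mx (N *m v) v) = @mulmx K 2 (1+1) (1+1) (row_mx (N *m v) v) (jordan_unip K 2 : 'M_(1+1))).
rewrite J2_block mul_row_block mul_mx_row !mulmx1 !mulmx0 ?addr0 ?add0r.
by rewrite hu !mulmxDl !mulmxA hNN !mul0mx !mul1mx add0r.
Qed.

Lemma J1sq (K : fieldType) :
  (jordan_unip K 2 - 1%:M) *m (jordan_unip K 2 - 1%:M) = 0.
Proof.
apply/matrixP => i j; rewrite !mxE big_ord_recl big_ord1 !mxE.
case: i => [[|[|//]] hi]; case: j => [[|[|//]] hj]; rewrite /= ?mulr0n ?mulr1n ?subr0 ?mulr0 ?mul0r ?subrr ?addr0.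
all: rewrite /nat_of_bool ?mulr0n ?mulr1n ?mulr0 ?mul0r ?addr0 ?add0r ?mul1r ?mulr1 //.
Qed.

Lemma vf_of_iso (K : fieldType) (u : 'M[K]_2) : iso_Vn u ->
  (u - 1%:M) *m (u - 1%:M) = 0 /\
  exists v : 'cV[K]_2, exists f : 'rV[K]_2, f *m (u - 1%:M) *m v = 1%:M.
Proof.
case=> P [hP huP].
set J := jordan_unip K 2.
have hNP : (u - 1%:M) *m P = P *m (J - 1%:M).
  by rewrite mulmxBl huP mul1mx mulmxBr mulmx1.
split.
  have : (u - 1%:M) *m (u - 1%:M) *m P = 0.
    by rewrite -mulmxA hNP mulmxA hNP -mulmxA J1sq mulmx0.
  generalize (u - 1%:M) => N h.
  by rewrite -[LHS]mulmx1 -(mulmxV hP) (mulmxA (N *m N)) h mul0mx.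
exists (P *m delta_mx 1 0), (delta_mx 0 0 *m invmx P).
rewrite -mulmxA (mulmxA _ P) hNP !mulmxA -(mulmxA _ (invmx P) P) mulVmx // mulmx1.
rewrite -rowE -colE.
apply/matrixP => x y; rewrite !ord1 !mxE /=.
by rewrite /nat_of_bool ?mulr0n ?mulr1n subr0.
Qed.



Lemma uu1 (K : fieldType) (h2 : (2%:R : K) = 0) n (u : 'M[K]_n) :
  (u - 1%:M) *m (u - 1%:M) = 0 -> u *m u = 1%:M.
Proof.
rewrite mulmxBl mulmxBr mul1mx mulmx1 => /eqP; rewrite subr_eq0 subr_eq => /eqP ->.
by rewrite addrAC (addxx2 h2) add0r (oppx2 h2).
Qed.

Lemma dist2 (K : fieldType) (h2 : (2%:R : K) = 0) (u : 'M[K]_2) (hu : u \in unitmx)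
  (v : 'cV[K]_2) (f : 'rV[K]_2) :
  (u - 1%:M) *m (u - 1%:M) = 0 -> f *m v = 0 -> f *m (u - 1%:M) *m v = 1%:M ->
  distinguished (tensor_action u) (@bV K 2).
Proof.
move=> hNN hfv hfNv.
have hX2 := X2_zero h2 hu hNN.
have hXj : forall j, (2 <= j)%N -> mxpow (tensor_action u - 1%:M) j = 0.
  by move=> j hj; apply: mxpow_zero hX2 hj.
have hr2 := rank2_lower h2 hu hNN hfv hfNv.
have hXX : (tensor_action u - 1%:M) *m (tensor_action u - 1%:M) = 0.
  by move: hX2; rewrite /= mulmx1.
have hrU : (\rank (mxpow (tensor_action u - 1%:M) 1) <= 2)%N.
  rewrite mxpow1.
  have hk : (tensor_action u - 1%:M <= kermx (tensor_action u - 1%:M))%MS.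
    exact/sub_kermxP.
  have := mxrankS hk; rewrite mxrank_ker; lia.
have hr : \rank (mxpow (tensor_action u - 1%:M) 1) = 2%N.
  by apply/eqP; rewrite eqn_leq hrU hr2.
have jm1 : jordan_mult (tensor_action u) 1 = 0.
  rewrite /jordan_mult; cbv zeta beta.
  change ((\rank (mxpow (tensor_action u - 1%:M) 0))%:Z
    - 2%:Z * (\rank (mxpow (tensor_action u - 1%:M) 1))%:Z
    + (\rank (mxpow (tensor_action u - 1%:M) 2))%:Z = 0).
  by rewrite mxpow0 mxrank1 hr hX2 mxrank0.
have jm2 : jordan_mult (tensor_action u) 2 = 2.
  by rewrite jm_top // hr.
have jmd : forall d, (3 <= d)%N -> jordan_mult (tensor_action u) d = 0.
  move=> d hd; rewrite /jordan_mult; cbv zeta beta.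
  by rewrite !hXj ?mxrank0 //; lia.
move=> d hd hm.
case: d hd hm => [|[|[|d]]] // _ hm.
- by rewrite jm1 in hm.
- split => //; first by rewrite jm2.
  rewrite /eps_one; cbv zeta beta.
  exists (mxvec (v *m f)); split; first by rewrite hX2 mulmx0.
  change (bV (mxvec (v *m f) *m mxpow (tensor_action u - 1%:M) 1) (mxvec (v *m f)) != 0).
  rewrite mxpow_key /= /bV !mxvecK trace_Fm // mul0r addr0.
  have huu := uu1 h2 hNN.
  have hinv : invmx u = u.
    by rewrite -[invmx u]mulmx1 -huu mulmxA mulVmx // mul1mx.
  have fuv : f *m u *m v = 1%:M.
    by rewrite -[u in f *m u](subrK 1%:M) mulmxDr mulmxDl hfNv mulmx1 hfv addr0.
  rewrite /Fm hinv mulmxBl.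
  have -> : v *m f *m (v *m f) = 0 by rewrite mulmxA -(mulmxA v) hfv mulmx0 mul0mx.
  rewrite subr0 !mulmxA mxtrace_mulC !mulmxA fuv mul1mx fuv.
  by rewrite /mxtrace big_ord1 mxE /= oner_eq0.
- by rewrite jmd in hm.
Qed.



Unset Implicit Arguments.

Theorem proposition12p3 (K : closedFieldType) (hK : 2%N \in [pchar K])
    (n : nat) (hn0 : (0 < n)%N) (hn : ~~ odd n)
    (u : 'M[K]_n) (hdet : \det u = 1) (hu : unipotent u) :
  distinguished (tensor_action u) (@bV K n) <-> (n = 2%N /\ iso_Vn u).
Proof.
have h2 : (2%:R : K) = 0 := pcharf0 hK.
have hU : u \in unitmx by rewrite unitmxE hdet unitr1.
split; last first.
  case=> en hiso; subst n.
  have [hNN [v [f0 hf0]]] := vf_of_iso hiso.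
  have [hfv hfNv] := t2_f hNN hf0.
  exact (dist2 h2 hU hNN hfv hfNv).
move=> hD.
have hu' : exists k, mxpow (u - 1%:M) k == 0 by case: hu => k hk; exists k; apply/eqP.
case: (ex_minnP hu') => t /eqP hNt tmin.
have t0 : (0 < t)%N.
  case: t hNt tmin => // hN0 _.
  have : \rank (mxpow (u - 1%:M) 0) = n by rewrite mxpow0 mxrank1.
  by rewrite hN0 mxrank0 => en; rewrite -en in hn0.
have hNt1 : mxpow (u - 1%:M) t.-1 != 0.
  apply/negP => /tmin; lia.
have [v [f0 hf0]] := exists_vf hNt1.
case ht : (odd t).
  have := case_odd h2 hU ht hNt hf0.
  by move=> /(hD 1%N (ltnSn 0)) [].
case: (leqP 4 t) => ht4.
  have [d [hd hjd]] := case_even4 h2 hU (negbT ht) ht4 hNt hf0.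
  have [_ hle _] := hD d hd (lt_trans (ltr0n _ 2) hjd).
  by move: (lt_le_trans hjd hle); rewrite ltxx.
have et : t = 2%N by move: ht ht4 t0; move: (t) => x; case: x => [|[|[|[|x]]]].
rewrite et in hNt hf0.
have hNN : (u - 1%:M) *m (u - 1%:M) = 0 by move: hNt; rewrite /= mulmx1.
change (f0 *m mxpow (u - 1%:M) 1 *m v = 1%:M) in hf0; rewrite mxpow1 in hf0.
have [hfv hfNv] := t2_f hNN hf0.
set f := f0 - _ in hfv hfNv.
case: (leqP 3 n) => hn3.
  have [h [w [hhv hhNv hhw]]] := exists_hw v ((u - 1%:M) *m v) hn3.
  rewrite mulmxA in hhNv.
  have hr3 := rank3_lower h2 hU hNN hfv hfNv hhv hhNv hhw.
  have hX2 := X2_zero h2 hU hNN.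
  have hj2 : jordan_mult (tensor_action u) 2 = (\rank (mxpow (tensor_action u - 1%:M) 1))%:Z.
    by rewrite jm_top.
  have hpos : 0 < jordan_mult (tensor_action u) 2 by rewrite hj2 ltz_nat; lia.
  have [_ hle _] := hD 2%N isT hpos.
  move: hle; rewrite hj2 lez_nat; lia.
have en : n = 2%N by move: hn hn3 hn0; move: (n) => x; case: x => [|[|[|x]]].
subst n; split => //.
exact: iso_from hNN hfv hfNv.
Qed.
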